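(* (i) Every graph with $n$ vertices has at most $\sqrt{n+1}\cdot 2^{n/2}$ cliques or at most $\sqrt{n+1}\cdot 2^{n/2}$ cocliques. (ii) For every $n\ge 0$ there is a graph with $n$ vertices that has at least $\frac12\sqrt{n+1}\cdot 2^{n/2}$ cliques and at least $\frac12\sqrt{n+1}\cdot 2^{n/2}$ cocliques.
   Context: A graph is a finite simple undirected graph $(V,E)$. A clique is a set $X\subseteq V$ with every two distinct vertices adjacent; a coclique is a set $Y\subseteq V$ with no two distinct vertices adjacent (the empty set and singletons count as both). *)

(* Defs.v *)
From Stdlib Require Import Reals.
From mathcomp Require Import all_boot.
Set Implicit Arguments. Unset Strict Implicit. Unset Printing Implicit Defensive.

Definition simple_graph (T : finType) (e : rel T) : Prop :=
  symmetric e /\ irreflexive e.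

Definition is_clique (T : finType) (e : rel T) (X : {set T}) : bool :=
  [forall x in X, forall y in X, (x != y) ==> e x y].

Definition is_coclique (T : finType) (e : rel T) (Y : {set T}) : bool :=
  [forall x in Y, forall y in Y, (x != y) ==> ~~ e x y].

(* number of cliques / cocliques (empty set and singletons included) *)
Definition num_cliques (T : finType) (e : rel T) : nat :=
  #|[set X : {set T} | is_clique e X]|.
Definition num_cocliques (T : finType) (e : rel T) : nat :=
  #|[set Y : {set T} | is_coclique e Y]|.

Definition cbound (n : nat) : R :=
  Rmult (R_sqrt.sqrt (Rplus (INR n) 1)) (Rpower 2 (Rdiv (INR n) 2)).

(* Main.v *)
Require Import Defs.
From Stdlib Require Import Reals Lra.
From mathcomp Require Import all_boot.
From mathcomp Require Import zify.



Definition gph (n k : nat) : rel 'I_n := fun x y => (x != y) && ((x < k) || (y < k)).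

Lemma ge_simple n k : simple_graph (gph n k).
Proof.
split; first by move=> x y; rewrite /gph eq_sym orbC.
by move=> x; rewrite /gph eqxx.
Qed.

Lemma cardK n k : k <= n -> #|[set i : 'I_n | i < k]| = k.
Proof.
move=> le; rewrite -sum1_card.
rewrite (eq_bigl (fun i : 'I_n => i < k)); last by move=> i; rewrite inE.
by rewrite (big_ord_narrow le) sum1_card card_ord.
Qed.

Lemma ge_coc n k : k <= n -> 2 ^ (n - k) <= num_cocliques (gph n k).
Proof.
move=> le.
have cI : #|~: [set i : 'I_n | i < k]| = n - k.
  by have := cardsC [set i : 'I_n | i < k]; rewrite cardK // card_ord; lia.
rewrite -cI -card_powerset; apply: subset_leq_card; apply/subsetP => Y.
rewrite !inE => /subsetP sY.
apply/forallP=> x; apply/implyP=> Hx; apply/forallP=> y; apply/implyP=> Hy.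
apply/implyP=> _; rewrite /gph negb_and; apply/orP; right.
by move: (sY x Hx) (sY y Hy); rewrite !inE negb_or => -> ->.
Qed.

Definition gopt n (o : option 'I_n) : {set 'I_n} := if o is Some i then [set i] else set0.
Arguments gopt {n}.

Lemma ge_clq n k : k <= n -> 2 ^ k * (n - k + 1) <= num_cliques (gph n k).
Proof.
move=> le.
set K := [set i : 'I_n | i < k].
set D := setX (powerset K) (None |: (@Some _) @: (~: K)).
have cD : #|D| = 2 ^ k * (n - k + 1).
  rewrite cardsX card_powerset cardK // cardsU1 card_imset; last by move=> ? ? [].
  have cC : #|~: K| = n - k by have := cardsC K; rewrite cardK // card_ord; lia.
  have -> : None \notin [set Some x | x in ~: K] by apply/imsetP => -[].
  by rewrite cC /= add1n addn1.
set f := fun p : {set 'I_n} * option 'I_n => p.1 :|: gopt p.2.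
have gK : forall o x, o \in None |: (@Some _) @: (~: K) -> x \in gopt o -> ~~ (x < k).
  move=> [i|] x Ho /=; last by rewrite inE.
  rewrite inE => /eqP ->; move: Ho; rewrite in_setU1 /= => /imsetP[j jK [->]].
  by move: jK; rewrite !inE.
have fin : {in D &, injective f}.
  move=> [A o] [A' o']; rewrite !in_setX /= !powersetE => /andP[/subsetP AK Ho] /andP[/subsetP AK' Ho'] E.
  rewrite /f /= in E.
  have Ko : forall x : 'I_n, x < k -> (x \in gopt o) = false /\ (x \in gopt o') = false.
    move=> x xk; split; apply/negbTE/negP.
      by move/(gK _ _ Ho); rewrite xk.
    by move/(gK _ _ Ho'); rewrite xk.
  have KA : forall x : 'I_n, ~~ (x < k) -> (x \in A) = false /\ (x \in A') = false.
    move=> x xk; split; apply/negbTE/negP.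
      by move/AK; rewrite inE (negbTE xk).
    by move/AK'; rewrite inE (negbTE xk).
  have E1 : A = A'.
    apply/setP => x; move: (congr1 (fun S : {set 'I_n} => (x \in S) && (x < k)) E) => /=.
    rewrite !inE.
    case xk: (x < k).
      by have [-> ->] := Ko x xk; rewrite !orbF !andbT.
    by have [-> ->] := KA x (negbT xk).
  subst A'.
  have E2 : gopt o = gopt o'.
    apply/setP => x; move: (congr1 (fun S : {set 'I_n} => (x \in S) && ~~ (x < k)) E) => /=.
    rewrite !inE.
    case xk: (x < k).
      by have [-> ->] := Ko x xk.
    by have [-> _] := KA x (negbT xk); rewrite /= !andbT.
  congr pair.
  clear Ko E; move: E2; case: o {Ho} => [i|]; case: o' {Ho'} => [j|] //=.
  - by move/set1_inj => ->.
  - by move/setP/(_ i); rewrite !inE eqxx.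
  - by move/setP/(_ j); rewrite !inE eqxx.
rewrite -cD -(card_in_imset fin); apply: subset_leq_card; apply/subsetP => X.
case/imsetP => -[A o]; rewrite !inE /= => /andP[/subsetP AK Ho] ->.
rewrite /f /=.
apply/forallP=> x; apply/implyP=> Hx; apply/forallP=> y; apply/implyP=> Hy.
apply/implyP=> xy; rewrite /gph xy /=.
move: Hx Hy; rewrite !inE => /orP[xA|xo].
  by move=> _; have := AK x xA; rewrite inE => ->.
case/orP=> [yA|yo].
  by have := AK y yA; rewrite inE => ->; rewrite orbT.
move: xo yo xy; case: o {Ho} => [i|] /=; rewrite ?inE //.
by move=> /eqP -> /eqP ->; rewrite eqxx.
Qed.

Lemma choose_t n : exists t, [/\ 2 ^ t <= n + 1, n + 1 < 4 * 2 ^ t & ~~ odd (n + t)].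
Proof.
have := @trunc_log_bounds 2 (n+1) isT (ltn_addl n (ltn0Sn 0)).
set t0 := trunc_log 2 (n+1) => /andP[h1 h2].
case o: (odd (n + t0)).
  case: t0 h1 h2 o => [|t] h1 h2 o.
    have n0 : n = 0 by move: h2; rewrite expn1; lia. by move: o; rewrite n0.
  exists t; split.
  - by apply: leq_trans h1; rewrite leq_exp2l.
  - by move: h2; rewrite !expnS; lia.
  - by move: o; rewrite addnS /= => ->.
exists t0; split => //; last by rewrite o.
by move: h2; rewrite expnS; lia.
Qed.

Lemma choose_k n : exists k, [/\ k <= n,
   (n + 1) * 2 ^ n <= 4 * ((2 ^ k * (n - k + 1)) * (2 ^ k * (n - k + 1))) &
   (n + 1) * 2 ^ n <= 4 * (2 ^ (n - k) * 2 ^ (n - k))].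
Proof.
have [t [h1 h2 h3]] := choose_t n.
have tn : t <= n by have := ltn_expl t (isT : 1 < 2); lia.
have := odd_double_half (n - t); rewrite oddB // -oddD (negbTE h3) /= add0n.
set k := (n - t)./2 => hk.
exists k.
have l : n - k = k + t by move: hk; rewrite -addnn; lia.
have nk : n = k + (k + t) by move: hk; rewrite -addnn; lia.
have e1 : 2 ^ n = 2 ^ k * (2 ^ k * 2 ^ t) by rewrite nk !expnD.
rewrite l e1 expnD.
move: h1 h2; rewrite {2 4 5}nk.
set a := 2 ^ k; set b := 2 ^ t => h1 h2.
have a0 : 0 < a by rewrite expn_gt0.
split; first lia.
- have hb : (k + (k + t) + 1) * b <= 4 * ((k + t + 1) * (k + t + 1)) by nia.
  nia.
- nia.
Qed.

Local Open Scope R_scope.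
Lemma cb_sq n : Rmult (cbound n) (cbound n) = INR ((n+1)*2^n).
Proof.
unfold cbound.
have H1 : Rmult (Rpower 2 (Rdiv (INR n) 2)) (Rpower 2 (Rdiv (INR n) 2)) = pow 2 n.
  rewrite -Rpower_plus -(Rpower_pow n); last lra.
  f_equal; lra.
have H2 : Rmult (sqrt (Rplus (INR n) 1)) (sqrt (Rplus (INR n) 1)) = Rplus (INR n) 1.
  apply: sqrt_sqrt. have := pos_INR n. lra.
have P2 : forall m, INR (2^m)%nat = 2 ^ m.
  elim=> [|m IH] //. rewrite expnS mulnE mult_INR IH /=. lra.
rewrite mulnE mult_INR P2 addnE plus_INR /=.
transitivity (Rmult (Rmult (sqrt (Rplus (INR n) 1)) (sqrt (Rplus (INR n) 1)))
   (Rmult (Rpower 2 (Rdiv (INR n) 2)) (Rpower 2 (Rdiv (INR n) 2)))); first by rewrite !Rmult_assoc; f_equal; rewrite -!Rmult_assoc; f_equal; apply Rmult_comm.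
rewrite H1 H2. reflexivity.
Qed.

Lemma cb_ge0 n : Rle 0 (cbound n).
Proof.
unfold cbound. apply Rmult_le_pos; first exact: sqrt_pos.
apply Rlt_le; apply exp_pos.
Qed.

Lemma le_cb n c : (c * c <= (n+1)*2^n)%N -> Rle (INR c) (cbound n).
Proof.
move=> /leP H. apply Rsqr_incr_0_var; last exact: cb_ge0.
rewrite /Rsqr cb_sq -mult_INR. apply le_INR. exact H.
Qed.

Lemma ge_half n c : ((n+1)*2^n <= 4 * (c * c))%N -> Rle (Rmult (/2) (cbound n)) (INR c).
Proof.
move=> /leP H. apply Rsqr_incr_0_var; last exact: pos_INR.
have H' := le_INR _ _ H. rewrite mult_INR mult_INR in H'.
rewrite /Rsqr.
have -> : Rmult (Rmult (/2) (cbound n)) (Rmult (/2) (cbound n)) = Rmult (/4) (Rmult (cbound n) (cbound n)) by field.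
rewrite cb_sq. rewrite !mult_INR. rewrite !mult_INR in H'. simpl INR in H'. lra.
Qed.

Local Close Scope R_scope.

Set Implicit Arguments. Unset Strict Implicit.
Section Comb.
Variable T : finType.
Variable e : rel T.

Lemma clqP (X : {set T}) : is_clique e X -> forall x y, x \in X -> y \in X -> x != y -> e x y.
Proof. move=> /forallP H x y Hx Hy Hxy. by move: (H x); rewrite Hx /= => /forallP/(_ y); rewrite Hy Hxy. Qed.

Lemma cocP (X : {set T}) : is_coclique e X -> forall x y, x \in X -> y \in X -> x != y -> ~~ e x y.
Proof. move=> /forallP H x y Hx Hy Hxy. by move: (H x); rewrite Hx /= => /forallP/(_ y); rewrite Hy Hxy. Qed.

Lemma clq_sub (X Y : {set T}) : Y \subset X -> is_clique e X -> is_clique e Y.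
Proof.
move=> /subsetP S H; apply/forallP=> x; apply/implyP=> Hx; apply/forallP=> y; apply/implyP=> Hy.
apply/implyP=> Hxy; exact: (clqP H (S _ Hx) (S _ Hy) Hxy).
Qed.

Lemma coc_sub (X Y : {set T}) : Y \subset X -> is_coclique e X -> is_coclique e Y.
Proof.
move=> /subsetP S H; apply/forallP=> x; apply/implyP=> Hx; apply/forallP=> y; apply/implyP=> Hy.
apply/implyP=> Hxy; exact: (cocP H (S _ Hx) (S _ Hy) Hxy).
Qed.

Definition pairs_on (U : {set T}) : {set {set T} * {set T}} :=
  [set p | [&& is_clique e p.1, is_coclique e p.2 & p.1 :|: p.2 == U]].

Lemma pairs_onP U p : reflect [/\ is_clique e p.1, is_coclique e p.2 & p.1 :|: p.2 = U] (p \in pairs_on U).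
Proof. rewrite inE; apply: (iffP and3P) => [[? ? /eqP ?]|[? ? ->]]; by split. Qed.

Lemma pairs_on0 : #|pairs_on set0| <= 1.
Proof.
rewrite -(cards1 ((set0 : {set T}), (set0 : {set T}))); apply: subset_leq_card; apply/subsetP => -[X Y] /pairs_onP [_ _ /=].
by move/eqP; rewrite setU_eq0 => /andP[/eqP -> /eqP ->]; rewrite inE.
Qed.


Lemma pairs_step (U : {set T}) v : v \in U -> #|pairs_on U| <= #|pairs_on (U :\ v)| + 2.
Proof.
move=> vU.
set N := [set u | e v u].
set A1 := [set p in pairs_on U | (v \in p.1) && (v \notin p.2)].
set A2 := [set p in pairs_on U | (v \notin p.1) && (v \in p.2)].
set A3 := [set p in pairs_on U | (v \in p.1) && (v \in p.2)].
set r := fun p : {set T} * {set T} => (p.1 :\ v, p.2 :\ v).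
have sub : pairs_on U \subset A1 :|: A2 :|: A3.
  apply/subsetP => -[X Y] H; have [cX cY /= HU] := pairs_onP _ _ H.
  have : v \in X :|: Y by rewrite HU.
  rewrite !inE /= cX cY HU eqxx /=; by case: (v \in X); case: (v \in Y).
have c3 : #|A3| <= 1.
  rewrite -(cards1 (v |: (U :&: N), v |: (U :\: N))); apply: subset_leq_card.
  apply/subsetP => -[X Y]; rewrite !inE /= => /andP[/and3P[cX cY /eqP HU] /andP[vX vY]].
  apply/eqP; congr pair; apply/setP => x; rewrite !inE.
  - case: (eqVneq x v) => [->|xv] //=.
    apply/idP/idP => [xX|/andP[xU evx]].
      by rewrite -HU inE xX /= (clqP cX vX xX) // eq_sym.
    move: xU; rewrite -HU inE => /orP[//|xY].
    by move: (cocP cY vY xY); rewrite eq_sym xv evx => /(_ isT).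
  - case: (eqVneq x v) => [->|xv] //=.
    apply/idP/idP => [xY|/andP[evx xU]].
      by rewrite -HU inE xY orbT /= (cocP cY vY xY) // eq_sym.
    move: xU; rewrite -HU inE => /orP[xX|//].
    by move: (clqP cX vX xX); rewrite eq_sym xv (negbTE evx) => /(_ isT).
have D : forall (A : {set T}), v \notin A -> A :\ v = A.
  by move=> A vA; apply/setP=> x; rewrite !inE; case: eqP => // ->; rewrite (negbTE vA).
have rP : forall p, p \in pairs_on U -> r p \in pairs_on (U :\ v).
  move=> [X Y] /pairs_onP [cX cY /= HU]; apply/pairs_onP; split => /=.
  - exact: clq_sub (subsetDl X [set v]) cX.
  - exact: coc_sub (subsetDl Y [set v]) cY.
  - by rewrite -setDUl HU.
have inj1 : {in A1 &, injective r}.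
  move=> [X Y] [X' Y']; rewrite !inE /= => /andP[_ /andP[vX vY]] /andP[_ /andP[vX' vY']] [E1 E2].
  congr pair; first by rewrite -(setD1K vX) E1 setD1K.
  by rewrite -(D _ vY) E2 D.
have inj2 : {in A2 &, injective r}.
  move=> [X Y] [X' Y']; rewrite !inE /= => /andP[_ /andP[vX vY]] /andP[_ /andP[vX' vY']] [E1 E2].
  congr pair; last by rewrite -(setD1K vY) E2 setD1K.
  by rewrite -(D _ vX) E1 D.
have s1 : r @: A1 :|: r @: A2 \subset pairs_on (U :\ v).
  rewrite subUset; apply/andP; split; apply/subsetP => q /imsetP[p pA ->]; apply: rP;
   by move: pA; rewrite inE => /andP[].
have ci : #|r @: A1 :&: r @: A2| <= 1.
  rewrite -(cards1 ((U :\ v) :&: N, (U :\ v) :\: N)); apply: subset_leq_card.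
  apply/subsetP => q; rewrite in_setI => /andP[/imsetP[[X1 Y1] p1A ->] /imsetP[[X2 Y2] p2A [E1 E2]]].
  move: p1A p2A; rewrite !inE /= => /andP[/and3P[cX1 cY1 /eqP HU1] /andP[vX1 vY1]].
  move=> /andP[/and3P[cX2 cY2 /eqP HU2] /andP[vX2 vY2]].
  apply/eqP; congr pair; apply/setP => x; rewrite !inE.
  - case: (eqVneq x v) => [->|xv] //=.
    apply/idP/idP => [xX|/andP[xU evx]].
      by rewrite -HU1 inE xX /= (clqP cX1 vX1 xX) // eq_sym.
    move: xU; rewrite -HU1 inE => /orP[//|xY].
    have : x \in Y2 :\ v by rewrite -E2; apply/setD1P; split.
    case/setD1P => _ xY2.
    by move: (cocP cY2 vY2 xY2); rewrite eq_sym xv evx => /(_ isT).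
  - case: (eqVneq x v) => [->|xv]; first by rewrite /= ?andbF. rewrite /=.
    apply/idP/idP => [xY|/andP[evx xU]].
      have : x \in Y2 :\ v by rewrite -E2; apply/setD1P; split.
      case/setD1P => _ xY2.
      by rewrite -HU1 inE xY orbT /= (cocP cY2 vY2 xY2) // eq_sym.
    move: xU; rewrite -HU1 inE => /orP[xX|//].
    by move: (clqP cX1 vX1 xX); rewrite eq_sym xv (negbTE evx) => /(_ isT).
have h1 := subset_leq_card sub.
have h2 := (leq_card_setU (A1 :|: A2) A3).1.
have h3 := (leq_card_setU A1 A2).1.
have h4 := cardsUI (r @: A1) (r @: A2).
rewrite !card_in_imset // in h4.
have h5 := subset_leq_card s1.
have h6 : #|A1| + #|A2| <= #|pairs_on (U :\ v)| + 1 by rewrite -h4 leq_add.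
apply: (leq_trans h1); apply: (leq_trans h2).
rewrite (_ : 2 = 1 + 1) // addnA; apply: leq_add => //.
exact: leq_trans h3 h6.
Qed.

Lemma pairs_bound k : forall U : {set T}, #|U| = k -> #|pairs_on U| <= 2 * k + 1.
Proof.
elim: k => [|k IH] U HU.
  move/eqP: HU; rewrite cards_eq0 => /eqP ->; exact: pairs_on0.
have : 0 < #|U| by rewrite HU.
case/card_gt0P => v vU.
have Hk : #|U :\ v| = k by move: (cardsD1 v U); rewrite vU HU add1n => -[].
apply: leq_trans (pairs_step vU) _.
have := IH _ Hk; lia.
Qed.

Lemma card_setT : #|{: {set T}}| = 2 ^ #|T|.
Proof. by have := card_powerset [set: T]; rewrite powersetT !cardsT. Qed.

Lemma prod_bound :
  #|[set X | is_clique e X]| * #|[set Y | is_coclique e Y]| <= (#|T| + 1) * 2 ^ #|T|.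
Proof.
rewrite -cardsX -sum1_card (partition_big (fun p : {set T} * {set T} => p.1 :|: p.2) predT) //=.
have E : forall U : {set T}, \sum_(p in setX [set X | is_clique e X] [set Y | is_coclique e Y] | p.1 :|: p.2 == U) 1 = #|pairs_on U|.
  move=> U; rewrite -sum1_card; apply: eq_bigl => p; rewrite !inE; by case: p => X Y; rewrite /= andbA.
under eq_bigr do rewrite E.
apply: (@leq_trans (\sum_(U : {set T}) (2 * #|U| + 1))).
  by apply: leq_sum => U _; exact: pairs_bound.
rewrite big_split /= sum_nat_const card_setT -big_distrr /=.
have S1 : \sum_(U : {set T}) #|U| = \sum_(U : {set T}) #|~: U| by rewrite [LHS](reindex_inj (@setC_inj T)).
have S2 : \sum_(U : {set T}) (#|U| + #|~: U|) = 2 ^ #|T| * #|T|.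
  under eq_bigr do rewrite cardsC. by rewrite sum_nat_const card_setT.
rewrite big_split /= -S1 in S2.
rewrite mulnDl mul1n muln1 mul2n -addnn S2 mulnC.
done.
Qed.

End Comb.

Theorem theorem2 :
  (forall (n : nat) (e : rel 'I_n), simple_graph e ->
     Rle (INR (num_cliques e)) (cbound n) \/ Rle (INR (num_cocliques e)) (cbound n))
  /\
  (forall n : nat, exists e : rel 'I_n, simple_graph e /\
     Rle (Rmult (/2) (cbound n)) (INR (num_cliques e)) /\
     Rle (Rmult (/2) (cbound n)) (INR (num_cocliques e))).
Proof.
split.
- move=> n e _.
  have H : num_cliques e * num_cocliques e <= (n + 1) * 2 ^ n.
    by have := prod_bound e; rewrite card_ord.
  case: (leqP (num_cliques e) (num_cocliques e)) => h; [left|right]; apply: le_cb.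
  + apply: leq_trans H; exact: leq_mul.
  + apply: leq_trans H; rewrite mulnC; apply: leq_mul => //; exact: ltnW.
- move=> n; have [k [kn h1 h2]] := choose_k n.
  exists (gph n k); split; first exact: ge_simple.
  split; apply: ge_half.
  + apply: leq_trans h1 _; apply: leq_mul => //; apply: leq_mul; exact: ge_clq.
  + apply: leq_trans h2 _; apply: leq_mul => //; apply: leq_mul; exact: ge_coc.
Qed.
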